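(* Fix an integer base $B\ge 2$. Let $m$ be a positive integer such that $mn$ is economical for every economical positive integer $n$. Then $m$ is frugal.
   Context: For a positive integer $n$, $\delta(n)$ is the number of digits of $n$ in base $B$, i.e. $\delta(n)=k$ iff $B^{k-1}\le n<B^k$. Define $\delta'(1)=0$ and $\delta'(a)=\delta(a)$ for $a>1$. If $n=\prod_{i} p_i^{a_i}$ is the prime power factorisation, set $\phi(n)=\sum_i \big(\delta(p_i)+\delta'(a_i)\big)$ (with $\phi(1)=0$), and $h(n)=\delta(n)-\phi(n)$. $n$ is economical if $h(n)\ge0$ and frugal if $h(n)>0$. *)

(* Defs.v *)
From mathcomp Require Import all_boot all_order all_algebra.
Set Implicit Arguments. Unset Strict Implicit. Unset Printing Implicit Defensive.
Import GRing.Theory Num.Theory.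

(* delta B n = number of base-B digits of n (for n >= 1, B >= 2):
   delta B n = k  iff  B^(k-1) <= n < B^k.  trunc_log B n is the largest e
   with B^e <= n. *)
Definition delta (B n : nat) : nat := (trunc_log B n).+1.

Definition delta' (B a : nat) : nat := if a == 1 then 0 else delta B a.

Definition phi (B n : nat) : nat :=
  \sum_(pa <- prime_decomp n) (delta B pa.1 + delta' B pa.2).

Definition h (B n : nat) : int := (delta B n)%:Z - (phi B n)%:Z.

Definition economical (B n : nat) : bool := (0 <= h B n)%R.
Definition frugal (B n : nat) : bool := (0 < h B n)%R.

(* Main.v *)
Require Import Defs.
From mathcomp Require Import all_boot all_order all_algebra.
From mathcomp Require Import zify.
From Stdlib Require Import Classical.
Set Implicit Arguments. Unset Strict Implicit. Unset Printing Implicit Defensive.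

Definition phiF (B : nat) (p e : nat) := delta B p + delta' B e.

Lemma phiE B n : phi B n = \sum_(p <- primes n) phiF B p (logn p n).
Proof. by rewrite /phi prime_decompE big_map. Qed.

Lemma cop_ndvd p x y : prime p -> p %| x -> coprime x y -> ~~ (p %| y).
Proof.
move=> pp px cxy; apply/negP => py.
have := cxy; rewrite /coprime => /eqP g.
have : p %| gcdn x y by rewrite dvdn_gcd px py.
by rewrite g dvdn1 => /eqP p1; rewrite p1 in pp.
Qed.

Lemma phiM B x y : 0 < x -> 0 < y -> coprime x y ->
  phi B (x * y) = phi B x + phi B y.
Proof.
move=> x0 y0 cxy; rewrite !phiE.
have pe : perm_eq (primes (x * y)) (primes x ++ primes y).
  apply: uniq_perm; first exact: primes_uniq.
    rewrite cat_uniq !primes_uniq /= andbT; apply/hasPn => p py /=.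
    apply/negP => px; move: px py; rewrite !mem_primes => /and3P[pp _ px] /and3P[_ _ py].
    have := coprime_dvdl px cxy; rewrite coprime_sym => /(coprime_dvdl py).
    by rewrite prime_coprime // dvdnn.
  by move=> p; rewrite mem_cat primesM.
rewrite (perm_big _ pe) big_cat /=; congr (_ + _); apply: eq_big_seq => p.
  rewrite mem_primes => /and3P[pp _ px]; rewrite lognM // (@logn_coprime p y) ?addn0 //.
  rewrite prime_coprime //; exact: cop_ndvd cxy.
rewrite mem_primes => /and3P[pp _ py]; rewrite lognM // (@logn_coprime p x) ?add0n //.
rewrite prime_coprime //; apply: cop_ndvd py _ => //; by rewrite coprime_sym.
Qed.

Lemma phi_pow B p a : prime p -> 0 < a -> phi B (p ^ a) = delta B p + delta' B a.
Proof.
move=> pp a0; rewrite phiE primesX // primes_prime // big_seq1 pfactorK //.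
Qed.

Lemma phi_prime B p : prime p -> phi B p = delta B p.
Proof. by move=> pp; have := phi_pow B pp (isT : 0 < 1); rewrite expn1 /delta' /= addn0. Qed.

Lemma phi1 B : phi B 1 = 0.
Proof. by rewrite phiE big_nil. Qed.

Lemma coprime_prodl p (s : seq nat) : all (coprime p) s -> coprime p (\prod_(q <- s) q).
Proof.
elim: s => [|q s IH] /=; first by rewrite big_nil coprimen1.
by move=> /andP[c1 c2]; rewrite big_cons coprimeMr c1 IH.
Qed.

Lemma phi_prod B (s : seq nat) : uniq s -> all prime s ->
  phi B (\prod_(p <- s) p) = \sum_(p <- s) delta B p.
Proof.
elim: s => [|p s IH] /=; first by rewrite !big_nil phi1.
move=> /andP[ps us] /andP[pp aps].
have P0 : 0 < \prod_(q <- s) q.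
  rewrite big_seq prodn_cond_gt0 // => i; move/allP: aps => H /H; exact: prime_gt0.
have cp : coprime p (\prod_(q <- s) q).
  apply: coprime_prodl; apply/allP => q qs; rewrite prime_coprime // dvdn_prime2 //; last by move/allP: aps; apply.
  by apply/eqP => e; rewrite e qs in ps.
by rewrite big_cons (phiM B (prime_gt0 pp) P0 cp) (phi_prime B pp) IH // big_cons.
Qed.

Lemma mult_count p N : 0 < p -> \sum_(i < N) (p %| i.+1 : nat) = N %/ p.
Proof.
move=> p0; elim: N => [|N IH]; first by rewrite big_ord0 div0n.
by rewrite big_ord_recr /= IH divnS // addnC.
Qed.

Definition smooth P n := all (fun q => q <= P) (primes n).

Definition chunk P N := [seq p <- iota P.+1 (N - P) | prime p].

Lemma count_cover P N :
  N <= \sum_(i < N) (smooth P i.+1 : nat) + \sum_(p <- chunk P N) N %/ p.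
Proof.
have -> : \sum_(p <- chunk P N) N %/ p = \sum_(p <- chunk P N) \sum_(i < N) (p %| i.+1 : nat).
  apply: eq_big_seq => p; rewrite mem_filter => /andP[pp _].
  by rewrite mult_count // prime_gt0.
rewrite (exchange_big) /= -big_split /=.
rewrite -{1}(card_ord N) -sum1_card; apply: leq_sum => i _.
case sm: (smooth P i.+1); first by rewrite leq_addr.
move/negbT: sm; rewrite /smooth => /allPn [q qpr qP].
have qs : q \in chunk P N.
  move: qpr; rewrite mem_primes => /and3P[pq _ qd].
  rewrite mem_filter pq mem_iota /=; have := dvdn_leq (isT : 0 < i.+1) qd.
  have := ltn_ord i; lia.
rewrite add0n (bigD1_seq q) //=; last by rewrite filter_uniq // iota_uniq.
move: qpr; rewrite mem_primes => /and3P[_ _ ->]; by [].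
Qed.

Lemma logn_le_t q n t : 0 < n -> n <= 2 ^ t -> logn q n <= t.
Proof.
move=> n0 nt; case: (posnP (logn q n)) => [-> //|lg].
have qp : prime q by move: lg; rewrite logn_gt0 mem_primes => /andP[].
have h1 : q ^ logn q n <= n by apply: dvdn_leq => //; exact: pfactor_dvdnn.
have h2 : 2 ^ logn q n <= q ^ logn q n by rewrite leq_exp2r // prime_gt1.
by rewrite -(@leq_exp2l 2) //; apply: leq_trans nt; apply: leq_trans h1.
Qed.

Lemma smooth_count P N t : N <= 2 ^ t ->
  \sum_(i < N) (smooth P i.+1 : nat) <= t.+1 ^ P.+1.
Proof.
move=> Nt.
have -> : \sum_(i < N) (smooth P i.+1 : nat) = #|[set i : 'I_N | smooth P i.+1]|.
  rewrite -sum1dep_card [RHS]big_mkcond /=; apply: eq_bigr => i _; by case: smooth.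
pose f (i : 'I_N) : {ffun 'I_P.+1 -> 'I_t.+1} := [ffun q : 'I_P.+1 => inord (logn q i.+1)].
have -> : t.+1 ^ P.+1 = #|{ffun 'I_P.+1 -> 'I_t.+1}| by rewrite card_ffun !card_ord.
apply: (@leq_card_in _ _ f) => i j; rewrite !inE => si sj fij.
have lt : forall (k : 'I_N), logn^~ k.+1 =1 fun q => logn q k.+1 by [].
have Hi : forall (k : 'I_N), k.+1 <= 2 ^ t by move=> k; apply: leq_trans Nt; exact: ltn_ord.
apply: val_inj => /=; apply: succn_inj; apply: eqn_from_log => // q.
case: (leqP q P) => qP.
  have := congr1 (fun g : {ffun 'I_P.+1 -> 'I_t.+1} => nat_of_ord (g (Ordinal (qP : q < P.+1)))) fij.
  rewrite /f !ffunE /=.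
  rewrite !inordK //; apply: leq_ltn_trans (logn_le_t _ _ _) (ltnSn t) => //.
have z : forall k, smooth P k -> logn q k = 0.
  move=> k sk; apply/eqP; rewrite eqn0Ngt logn_gt0; apply/negP => qk.
  by move/allP: sk => /(_ q qk); lia.
by rewrite !z.
Qed.

Lemma prod_gain (s : seq nat) N : all (fun p => 0 < p) s ->
  \prod_(p <- s) p * (N + \sum_(p <- s) N %/ p) <= N * \prod_(p <- s) p.+1.
Proof.
elim: s => [|p s IH] /=; first by rewrite !big_nil addn0 muln1 mul1n.
move=> /andP[p0 /IH {}IH]; rewrite !big_cons.
set P1 := \prod_(j <- s) j in IH *; set Q1 := \prod_(j <- s) j.+1 in IH *.
set S1 := \sum_(j <- s) N %/ j in IH *.
have h : p * (N %/ p) <= N by rewrite mulnC leq_trunc_div.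
have e : N * (p.+1 * Q1) = p.+1 * (N * Q1) by rewrite mulnCA.
rewrite e; apply: leq_trans (leq_mul (leqnn p.+1) IH).
have : p * P1 * (N %/ p) <= N * P1 by rewrite mulnAC leq_mul2r h orbT.
nia.
Qed.

Lemma sq_le_pow2 j : 4 <= j -> j * j <= 2 ^ j.
Proof.
elim: j => // j IH; rewrite leq_eqVlt => /orP[/eqP <- //| j4].
have := IH j4; rewrite expnS; nia.
Qed.

Lemma chunk_gain P : exists N, P < N /\
  3 * \prod_(p <- chunk P N) p <= 2 * \prod_(p <- chunk P N) p.+1.
Proof.
pose j := P + 4; pose t := (2 ^ j).-1; pose N := 2 ^ t.
have j2 : 0 < 2 ^ j by rewrite expn_gt0.
have tj : j <= t by have := ltn_expl j (isT : 1 < 2); rewrite /t; lia.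
have tN : t < N by apply: ltn_expl.
have grow : 2 * t.+1 ^ P.+1 <= N.
  have -> : t.+1 = 2 ^ j by rewrite /t prednK.
  rewrite -expnM -expnS /N leq_exp2l //.
  have := sq_le_pow2 (isT : 4 <= 4 + P); rewrite addnC -/j; rewrite /t; nia.
exists N; split; first by lia.
have c1 := count_cover P N.
have c2 := smooth_count P (leqnn N).
have pos : all (fun p => 0 < p) (chunk P N).
  by apply/allP => p; rewrite mem_filter => /andP[/prime_gt0].
have g := prod_gain N pos.
set A := \prod_(p <- chunk P N) p in g *; set C := \prod_(p <- chunk P N) p.+1 in g *.
set S := \sum_(p <- chunk P N) N %/ p in c1 g.
have N0 : 0 < N by rewrite expn_gt0.
have hS : N <= 2 * S by lia.
rewrite -(leq_pmul2l N0).
have : A * (2 * N) + A * N <= A * (2 * (N + S)) by rewrite -mulnDr leq_mul2l; apply/orP; right; lia.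
nia.
Qed.

Lemma gainK k P : exists s : seq nat, [/\ uniq s, all prime s, all (fun p => P < p) s &
  3 ^ k * \prod_(p <- s) p <= 2 ^ k * \prod_(p <- s) p.+1].
Proof.
elim: k P => [|k IH] P.
  by exists [::]; rewrite !big_nil.
have [N [PN g]] := chunk_gain P.
have [s [us ps Ns gs]] := IH N.
exists (chunk P N ++ s); split.
- rewrite cat_uniq us filter_uniq ?iota_uniq //= andbT; apply/hasPn => p /(allP Ns) Np.
  by rewrite mem_filter mem_iota negb_and; apply/orP; right; apply/negP; lia.
- by rewrite all_cat ps andbT; apply/allP => p; rewrite mem_filter => /andP[].
- rewrite all_cat; apply/andP; split.
    by apply/allP => p; rewrite mem_filter mem_iota => /andP[_ /andP[]].
  by apply/allP => p /(allP Ns); lia.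
rewrite !big_cat !expnS /=.
set a := \prod_(i <- chunk P N) i in g *; set b := \prod_(i <- chunk P N) i.+1 in g *.
set c := \prod_(i <- s) i in gs *; set d := \prod_(i <- s) i.+1 in gs *.
have := leq_mul g gs; nia.
Qed.

Lemma gain T P : exists s : seq nat, [/\ uniq s, all prime s, all (fun p => P < p) s &
  T * \prod_(p <- s) p <= \prod_(p <- s) p.+1].
Proof.
have [s [us ps Ps gs]] := gainK (2 * T) P.
exists s; split => //.
have h1 : T < 2 ^ T by apply: ltn_expl.
have h2 : 2 ^ T * 4 ^ T <= 9 ^ T by rewrite -expnMn; case: (posnP T) => [-> //|T0]; rewrite leq_exp2r.
move: gs; rewrite !expnM /=.
set a := \prod_(i <- s) i; set b := \prod_(i <- s) i.+1.
have e1 : (3 ^ 2) = 9 by []. have e2 : 2 ^ 2 = 4 by [].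
rewrite e1 e2 => gs.
have h3 : 0 < 4 ^ T by rewrite expn_gt0.
have : T * 4 ^ T * a <= 9 ^ T * a.
  by rewrite leq_mul2r; apply/orP; right; apply: leq_trans h2; rewrite leq_mul2r ltnW ?orbT.
nia.
Qed.

Lemma find_thr (Q : pred nat) J : ~~ Q 0 -> Q J ->
  let k := find Q (iota 0 J.+1) in [/\ 0 < k, k <= J, Q k & ~~ Q k.-1].
Proof.
move=> Q0 QJ k.
have hs : has Q (iota 0 J.+1).
  apply/hasP; exists J; last exact: QJ.
  rewrite mem_iota; lia.
have kl : k < J.+1 by move: hs; rewrite has_find size_iota.
have Qk : Q k by have := nth_find 0 hs; rewrite nth_iota.
have k0 : 0 < k by case: (posnP k) Qk => [->|//]; rewrite (negbTE Q0).
split => //.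
have hk : k.-1 < k by lia.
have := before_find 0 hk; rewrite nth_iota ?add0n; last by lia.
by move=> ->.
Qed.

Lemma binom_low m k : 0 < m -> m ^ k * (m + k) <= m * (m + 1) ^ k.
Proof.
move=> m0; elim: k => [|k IH]; first by rewrite !expn0 addn0 mul1n muln1.
rewrite !expnS.
have := leq_mul (leqnn (m + 1)) IH.
set X := m ^ k; set Y := (m + 1) ^ k; nia.
Qed.

Lemma mix (m X Y U V U' V' : nat) : 0 < X -> 0 < Y -> 0 < V ->
  Y * V <= X * U -> m * X * U' < (m + 1) * Y * V' -> m * U' * V < (m + 1) * V' * U.
Proof.
move=> X0 Y0 V0 h1 h2.
have h3 : m * X * U' * (Y * V) < (m + 1) * Y * V' * (Y * V) by rewrite ltn_pmul2r // muln_gt0 Y0.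
have h4 : (m + 1) * Y * V' * (Y * V) <= (m + 1) * Y * V' * (X * U) by rewrite leq_mul2l h1 orbT.
have h5 : X * Y * (m * U' * V) < X * Y * ((m + 1) * V' * U).
  have e1 : X * Y * (m * U' * V) = m * X * U' * (Y * V) by nia.
  have e2 : X * Y * ((m + 1) * V' * U) = (m + 1) * Y * V' * (X * U) by nia.
  by rewrite e1 e2; apply: leq_trans h3 h4.
by move: h5; rewrite ltn_pmul2l // muln_gt0 X0.
Qed.

Lemma approx_core u v m a a' c c' k : prime u -> prime v -> u != v -> 0 < m -> a < a' -> 0 < k ->
  ~~ (m ^ k.-1 * u ^ a < (m + 1) ^ k.-1 * v ^ c) -> m ^ k * u ^ a < (m + 1) ^ k * v ^ c ->
  ~~ (m ^ k.-1 * u ^ a' < (m + 1) ^ k.-1 * v ^ c') -> m ^ k * u ^ a' < (m + 1) ^ k * v ^ c' ->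
  exists d1 c1, [/\ 0 < d1, 0 < c1 &
   (v ^ c1 < u ^ d1 /\ m * u ^ d1 < (m + 1) * v ^ c1) \/ (u ^ d1 < v ^ c1 /\ m * v ^ c1 < (m + 1) * u ^ d1)].
Proof.
move=> pu pv uv m0 aa k0; rewrite -!leqNgt => H1 H2 H3 H4.
have u1 := prime_gt1 pu; have v1 := prime_gt1 pv.
have ek : k = k.-1.+1 by rewrite prednK.
move: H2 H4; rewrite ek !expnS -/(_ .+1) => H2 H4.
set X := m ^ k.-1 in H1 H2 H3 H4; set Y := (m + 1) ^ k.-1 in H1 H2 H3 H4.
have X0 : 0 < X by rewrite expn_gt0 m0.
have Y0 : 0 < Y by rewrite expn_gt0 addn1.
have pos : forall b e, 1 < b -> 0 < b ^ e by move=> b e b1; rewrite expn_gt0; lia.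
have E1 : m * u ^ a' * v ^ c < (m + 1) * v ^ c' * u ^ a.
  exact: (mix X0 Y0 (pos _ _ v1) H1 H4).
have E2 : m * u ^ a * v ^ c' < (m + 1) * v ^ c * u ^ a'.
  exact: (mix X0 Y0 (pos _ _ v1) H3 H2).
have [d1 ed] : exists d1, a' = a + d1.+1 by exists (a' - a).-1; lia.
rewrite ed expnD in E1 E2.
have Ua := pos u a u1; have Ud : 2 <= u ^ d1.+1 by apply: leq_trans (ltn_expl _ _) => //; rewrite expnS leq_pmulr ?pos.
case: (leqP c c') => cc.
  have [c1 ec] : exists c1, c' = c + c1 by exists (c' - c); lia.
  rewrite ec expnD in E1 E2.
  have Vc := pos v c v1.
  have F1 : m * u ^ d1.+1 < (m + 1) * v ^ c1.
    have : u ^ a * v ^ c * (m * u ^ d1.+1) < u ^ a * v ^ c * ((m + 1) * v ^ c1).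
      have e1 : u ^ a * v ^ c * (m * u ^ d1.+1) = m * (u ^ a * u ^ d1.+1) * v ^ c by nia.
      have e2 : u ^ a * v ^ c * ((m + 1) * v ^ c1) = (m + 1) * (v ^ c * v ^ c1) * u ^ a by nia.
      by rewrite e1 e2.
    by rewrite ltn_pmul2l // muln_gt0 Ua Vc.
  have F2 : m * v ^ c1 < (m + 1) * u ^ d1.+1.
    have : u ^ a * v ^ c * (m * v ^ c1) < u ^ a * v ^ c * ((m + 1) * u ^ d1.+1).
      have e1 : u ^ a * v ^ c * (m * v ^ c1) = m * u ^ a * (v ^ c * v ^ c1) by nia.
      have e2 : u ^ a * v ^ c * ((m + 1) * u ^ d1.+1) = (m + 1) * v ^ c * (u ^ a * u ^ d1.+1) by nia.
      by rewrite e1 e2.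
    by rewrite ltn_pmul2l // muln_gt0 Ua Vc.
  have c10 : 0 < c1.
    case: (posnP c1) F1 => // ->; rewrite expn0; nia.
  have ne : u ^ d1.+1 != v ^ c1.
    apply/eqP => e; have : u %| v ^ c1 by rewrite -e dvdn_exp.
    by rewrite Euclid_dvdX // dvdn_prime2 // (negbTE uv).
  exists d1.+1, c1; split => //.
  case: (ltngtP (v ^ c1) (u ^ d1.+1)) => h; [left | right | by rewrite h eqxx in ne]; split => //.
have [e ec] : exists e, c = c' + e.+1 by exists (c - c').-1; lia.
rewrite ec expnD in E1.
have Vc := pos v c' v1; have Ve := pos v e.+1 v1.
have : u ^ a * v ^ c' * (m * u ^ d1.+1 * v ^ e.+1) < u ^ a * v ^ c' * (m + 1).
  have e1 : u ^ a * v ^ c' * (m * u ^ d1.+1 * v ^ e.+1) = m * (u ^ a * u ^ d1.+1) * (v ^ c' * v ^ e.+1) by nia.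
  have e2 : u ^ a * v ^ c' * (m + 1) = (m + 1) * v ^ c' * u ^ a by nia.
  by rewrite e1 e2.
rewrite ltn_pmul2l ?muln_gt0 ?Ua ?Vc // => h; exfalso.
have : m * 2 * 1 <= m * u ^ d1.+1 * v ^ e.+1 by rewrite leq_mul // leq_mul.
lia.
Qed.


Lemma approx u v m : prime u -> prime v -> u != v -> 0 < m ->
  exists d1 c1, [/\ 0 < d1, 0 < c1 &
   (v ^ c1 < u ^ d1 /\ m * u ^ d1 < (m + 1) * v ^ c1) \/ (u ^ d1 < v ^ c1 /\ m * v ^ c1 < (m + 1) * u ^ d1)].
Proof.
move=> pu pv uv m0.
have u1 := prime_gt1 pu; have v1 := prime_gt1 pv.
pose J := m * v.
have hJ : v * m ^ J < (m + 1) ^ J.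
  have := binom_low J m0; rewrite /J.
  have e : m + m * v = m * (1 + v) by rewrite mulnDr muln1.
  rewrite e mulnCA leq_pmul2l // => h; apply: leq_trans h.
  by rewrite mulnC ltn_pmul2l ?expn_gt0 ?m0 //; lia.
pose c a := trunc_log v (u ^ a).
pose Q a := fun j => m ^ j * u ^ a < (m + 1) ^ j * v ^ (c a).
have Q0 : forall a, ~~ Q a 0.
  move=> a; rewrite /Q !expn0 !mul1n -leqNgt; apply: trunc_logP => //; rewrite expn_gt0; lia.
have QJ : forall a, Q a J.
  move=> a; rewrite /Q.
  have h1 : u ^ a < v ^ (c a).+1 by apply: trunc_log_ltn.
  have h2 : m ^ J * u ^ a < m ^ J * v ^ (c a).+1 by rewrite ltn_pmul2l ?expn_gt0 ?m0.
  apply: (leq_trans h2); rewrite expnS mulnA leq_mul2r; apply/orP; right; rewrite mulnC; exact: ltnW.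
pose g (a : 'I_J.+2) : 'I_J.+1 := inord (find (Q a) (iota 0 J.+1)).
have [a [a' [ne e]]] : exists a a', a != a' /\ g a = g a'.
  apply: NNPP => H.
  have inj : injective g.
    move=> a a' e; apply: NNPP => ne; apply: H; exists a, a'; split => //; by apply/eqP.
  by have := leq_card g inj; rewrite !card_ord ltnn.
have key : forall (x y : 'I_J.+2), x < y -> g x = g y -> exists d1 c1, [/\ 0 < d1, 0 < c1 &
   (v ^ c1 < u ^ d1 /\ m * u ^ d1 < (m + 1) * v ^ c1) \/ (u ^ d1 < v ^ c1 /\ m * v ^ c1 < (m + 1) * u ^ d1)].
  move=> x y xy gxy.
  have [kx0 kxJ Qkx nQkx] := find_thr (Q0 x) (QJ x).
  have [ky0 kyJ Qky nQky] := find_thr (Q0 y) (QJ y).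
  have : find (Q x) (iota 0 J.+1) = find (Q y) (iota 0 J.+1).
    by have := congr1 val gxy; rewrite /g /= !inordK.
  move=> eq; rewrite eq in kx0 Qkx nQkx.
  exact: (approx_core pu pv uv m0 xy kx0 nQkx Qkx nQky Qky).
case: (ltngtP a a') => h.
- exact: key h e.
- exact: key h (esym e).
- by move: ne; rewrite (val_inj h) eqxx.
Qed.




Lemma ivt (P : pred nat) lo hi : lo <= hi -> P lo -> ~~ P hi ->
  exists i, [/\ lo <= i, i < hi, P i & ~~ P i.+1].
Proof.
elim: hi => [|hi IH]; first by rewrite leqn0 => /eqP -> ->.
rewrite leq_eqVlt => /orP[/eqP <- -> //| lh] Pl nPh.
case Ph: (P hi).
  by exists hi; split => //; lia.
have [i [h1 h2 h3 h4]] := IH lh Pl (negbT Ph).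
by exists i; split => //; lia.
Qed.

Lemma walk u v m y d1 c1 N1 a0 blo bhi : 0 < m -> 1 < v -> 0 < y -> 0 < u ->
  v ^ c1 < u ^ d1 -> m * u ^ d1 < (m + 1) * v ^ c1 ->
  v ^ c1.+1 * c1 <= blo -> blo <= bhi ->
  y * u ^ a0 * v ^ blo <= N1 -> N1 < y * u ^ a0 * v ^ bhi ->
  exists a b, [/\ a0 <= a <= a0 + v ^ c1.+1 * d1, blo - v ^ c1.+1 * c1 <= b < bhi,
       N1 <= y * u ^ a * v ^ b & m * (y * u ^ a * v ^ b) < (m + 1) * N1].
Proof.
move=> m0 v1 y0 u0 st1 st2 Sb bb Hlo Hhi.
set S := v ^ c1.+1 in Sb *.
pose F a b := y * u ^ a * v ^ b.
have [bs [b1 b2 b3 b4]] := @ivt (fun b => F a0 b <= N1) _ _ bb Hlo (negbT (ltn_geF Hhi)).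
rewrite /= -ltnNge in b4.
pose G k := F (a0 + k * d1) (bs - k * c1).
have Gstep : forall k, k < S -> G k.+1 * v ^ c1 = G k * u ^ d1.
  move=> k kS; rewrite /G /F.
  have kc : k.+1 * c1 <= bs by have := leq_mul kS (leqnn c1); lia.
  have e1 : a0 + k.+1 * d1 = (a0 + k * d1) + d1 by rewrite mulSn; lia.
  have e2 : bs - k * c1 = (bs - k.+1 * c1) + c1 by rewrite mulSn in kc *; lia.
  rewrite e1 e2 !expnD; nia.
have S0 : 0 < S by rewrite expn_gt0; lia.
have X0 : 0 < v ^ c1 by rewrite expn_gt0; lia.
have GS : N1 < G S.
  have hb := binom_low S X0.
  have eS : S = v ^ c1 * v by rewrite /S expnS mulnC.
  have h1 : (v ^ c1) ^ S * (1 + v) <= (v ^ c1 + 1) ^ S.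
    move: hb; rewrite {2}eS; set X := v ^ c1; set Z := X ^ S => hb.
    have e5 : Z * (X + X * v) = X * (Z * (1 + v)) by nia.
    by move: hb; rewrite e5 leq_pmul2l.
  have h2 : (v ^ c1 + 1) ^ S <= (u ^ d1) ^ S by rewrite leq_exp2r // addn1.
  have e3 : G S * (v ^ c1) ^ S = F a0 bs * (u ^ d1) ^ S.
    rewrite /G /F -!expnM.
    have e4 : bs = (bs - S * c1) + c1 * S by rewrite mulnC; lia.
    rewrite {2}e4 expnD expnD mulnC [d1 * S]mulnC; nia.
  have XS : 0 < (v ^ c1) ^ S by rewrite expn_gt0 X0.
  rewrite -(ltn_pmul2r XS) e3.
  have h3 : N1 * (v ^ c1) ^ S < F a0 bs * v * (v ^ c1) ^ S.
    by rewrite ltn_pmul2r // /F -mulnA -expnSr.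
  apply: (leq_trans h3); rewrite -mulnA leq_mul2l; apply/orP; right.
  apply: leq_trans h2; apply: leq_trans h1; rewrite mulnC leq_mul2l; apply/orP; right; lia.
case G0: (G 0 < N1); last first.
  exists a0, bs; move: G0; rewrite /G !mul0n addn0 subn0 => /negbT; rewrite -leqNgt => G0.
  have e : F a0 bs = N1 by apply/eqP; rewrite eqn_leq b3 G0.
  have N0 : 0 < N1 by rewrite -e /F !muln_gt0 y0 !expn_gt0 u0; lia.
  rewrite /F in e; rewrite e; split; try lia.
have [k [_ k2 k3 k4]] := @ivt (fun k => G k < N1) 0 S (ltnW S0) G0 (negbT (leq_gtF (ltnW GS))).
rewrite /= -leqNgt in k4.
have st := Gstep k k2.
exists (a0 + k.+1 * d1), (bs - k.+1 * c1); split.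
- have := leq_mul k2 (leqnn d1); lia.
- have := leq_mul k2 (leqnn c1); lia.
- exact: k4.
set A := G k in st k3 *; set A' := G k.+1 in st k4 *.
have A0 : 0 < A by rewrite /A /G /F !muln_gt0 y0 !expn_gt0 u0; lia.
have h1 : m * A' * v ^ c1 < (m + 1) * A * v ^ c1.
  have e1 : m * A' * v ^ c1 = A * (m * u ^ d1) by rewrite -mulnA st; nia.
  have e2 : (m + 1) * A * v ^ c1 = A * ((m + 1) * v ^ c1) by nia.
  by rewrite e1 e2 ltn_pmul2l.
move: h1; rewrite ltn_pmul2r // => h1; apply: leq_trans h1 _; rewrite leq_mul2l; apply/orP; right; lia.
Qed.


Lemma deltaE B n K : 1 < B -> B ^ K <= n < B ^ K.+1 -> delta B n = K.+1.
Proof. by move=> B1 h; rewrite /delta (trunc_log_eq B1 h). Qed.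

Lemma delta_lt B n : 1 < B -> n < B ^ delta B n.
Proof. by move=> B1; exact: trunc_log_ltn. Qed.

Lemma delta_ge B n : 1 < B -> 0 < n -> B ^ (delta B n).-1 <= n.
Proof. by move=> B1 n0; exact: trunc_logP. Qed.

Lemma delta_prime_le B p : 1 < B -> 0 < p -> B ^ delta B p <= B * p.
Proof. by move=> B1 p0; rewrite /delta expnS leq_mul2l delta_ge ?orbT. Qed.

Lemma cube_lt X : 10 <= X -> X * X * X < 2 ^ X.
Proof.
elim: X => // X IH; rewrite leq_eqVlt => /orP[/eqP <- //| h].
have := IH h; rewrite expnS; nia.
Qed.

Lemma coprime_big_prime m p : 0 < m -> prime p -> m < p -> coprime m p.
Proof.
move=> m0 pp mp; rewrite coprime_sym prime_coprime //; apply/negP => /(dvdn_leq m0); lia.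
Qed.

Lemma lt2 m n N : 0 < m -> m * n < (m + 1) * N -> n < 2 * N.
Proof. move=> m0 h; nia. Qed.

Lemma core B m u v d1 c1 : 1 < B -> 0 < m -> prime u -> prime v -> u != v -> m < u -> m < v ->
  0 < d1 -> 0 < c1 -> v ^ c1 < u ^ d1 -> m * u ^ d1 < (m + 1) * v ^ c1 ->
  exists n, [/\ 0 < n, phi B n = delta B n, coprime m n &
                delta B (m * n) + 1 = delta B m + delta B n].
Proof.
move=> B1 m0 pu pv uv mu mv d10 c10 st1 st2.
have u1 := prime_gt1 pu; have v1 := prime_gt1 pv.
pose S := v ^ c1.+1; pose C := delta B u + delta B v.
pose X0 := 10 + S * (c1 + d1) + B + B ^ C.+1.
pose X := B ^ X0.
have XX0 : X0 < X by apply: ltn_expl.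
have hX : X = B ^ X0 by [].
have hX0 : X0 = 10 + S * (c1 + d1) + B + B ^ C.+1 by [].
clearbody X; clearbody X0.
have BX : 2 * X <= B * X by rewrite leq_mul2r B1 orbT.
pose a0 := X; pose blo := X + S * c1; pose bhi := blo + B.
pose Z := u ^ a0 * v ^ blo; pose W := B ^ C.+1 * (X * X).
have WZ : W < Z.
  have h1 : X * X * X < 2 ^ X by apply: cube_lt; lia.
  have h2 : 2 ^ X <= Z.
    apply: (@leq_trans (u ^ a0)); first by rewrite leq_exp2r; lia.
    by rewrite /Z leq_pmulr // expn_gt0; lia.
  have hB : B ^ C.+1 < X by lia.
  have Xp : 0 < X * X by rewrite muln_gt0 andbb; lia.
  have h3 : W < X * X * X by rewrite /W mulnC (ltn_pmul2l Xp).
  lia.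
have W0 : 0 < W.
  have h1 : 0 < B ^ C.+1 by rewrite expn_gt0; lia.
  have h2 : 0 < X by lia.
  have h3 : 0 < B ^ C.+1 * (X * X) by rewrite muln_gt0 h1 muln_gt0 h2.
  exact: h3.
have [s [us ps vs gs]] := gain Z (u + v).
have sp : forall p, p \in s -> prime p by move=> p; move/allP: ps; apply.
have Bs : \prod_(p <- s) p.+1 <= B ^ (\sum_(p <- s) delta B p).
  rewrite expn_sum big_seq [X in _ <= X]big_seq; apply: leq_prod => p /sp pp.
  exact: delta_lt.
pose Phi j := \sum_(p <- take j s) delta B p.
pose Pr j := \prod_(p <- take j s) p.
have P0 : W * B ^ Phi 0 < Z * Pr 0 by rewrite /Phi /Pr take0 !big_nil !muln1.
have Ps : ~~ (W * B ^ Phi (size s) < Z * Pr (size s)).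
  rewrite -leqNgt /Phi /Pr take_size.
  apply: leq_trans (_ : 1 * B ^ (\sum_(p <- s) delta B p) <= _); last by rewrite leq_mul2r W0 orbT.
  by rewrite mul1n; apply: leq_trans gs Bs.
have [j [_ js Pj nPj]] := @ivt (fun j => W * B ^ Phi j < Z * Pr j) 0 (size s) (leq0n _) P0 Ps.
rewrite /= -leqNgt in nPj.
pose y := Pr j.+1.
have ts := take_nth 0 js.
have yP : phi B y = Phi j.+1.
  rewrite /y /Pr /Phi phi_prod //; first by rewrite take_uniq.
  by apply/allP => p /mem_take /sp.
pose p := nth 0 s j.
have pp : prime p by apply: sp; rewrite mem_nth.
have Phis : Phi j.+1 = Phi j + delta B p by rewrite /Phi ts -cats1 big_cat big_seq1.
have Prs : Pr j.+1 = Pr j * p by rewrite /Pr ts -cats1 big_cat big_seq1.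
have y0 : 0 < y by rewrite /y /Pr big_seq prodn_cond_gt0 // => q /mem_take /sp /prime_gt0.
have Hy1 : Z * y <= W * B ^ phi B y by rewrite yP.
have Hy2 : W * B ^ phi B y < B * (Z * y).
  rewrite yP Phis expnD mulnA /y Prs.
  have hp := delta_prime_le B1 (prime_gt0 pp).
  apply: (@leq_trans (Z * Pr j * B ^ delta B p)).
    by rewrite ltn_pmul2r ?expn_gt0 //; lia.
  have e : B * (Z * (Pr j * p)) = Z * Pr j * (B * p) by nia.
  by rewrite e leq_mul2l hp orbT.
pose N1 := W * B ^ phi B y.
have L1 : y * u ^ a0 * v ^ blo <= N1.
  have e : y * u ^ a0 * v ^ blo = Z * y by rewrite /Z; nia.
  by rewrite e.
have L2 : N1 < y * u ^ a0 * v ^ bhi.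
  have e : y * u ^ a0 * v ^ bhi = v ^ B * (Z * y) by rewrite /bhi /Z expnD; nia.
  rewrite e; apply: leq_trans Hy2 _; rewrite leq_mul2r ltnW ?orbT //; exact: ltn_expl.
have Sb : v ^ c1.+1 * c1 <= blo by rewrite /blo /S; lia.
have [a [b [/andP[ha1 ha2] /andP[hb1 hb2] hn1 hn2]]] :=
  walk m0 v1 y0 (prime_gt0 pu) st1 st2 Sb (leq_addr _ _) L1 L2.
pose n := y * u ^ a * v ^ b.
have n0 : 0 < n by rewrite /n !muln_gt0 y0 !expn_gt0 (prime_gt0 pu) (prime_gt0 pv).
have da : delta B a = X0.+1.
  apply: deltaE => //; rewrite expnS -hX; apply/andP; split; lia.
have db : delta B b = X0.+1.
  apply: deltaE => //; rewrite expnS -hX; apply/andP; split; rewrite /bhi /blo in hb2 *; lia.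
have u0 := prime_gt0 pu; have v0 := prime_gt0 pv.
have sgt : forall q, q \in take j.+1 s -> u + v < q.
  by move=> q /mem_take qs; move/allP: vs => /(_ q qs).
have sprime : forall q, q \in take j.+1 s -> prime q by move=> q /mem_take /sp.
have cuy : coprime (u ^ a) y.
  apply: coprimeXl; apply: coprime_prodl; apply/allP => q qs.
  apply: coprime_big_prime => //; [exact: sprime | have := sgt q qs; lia].
have cvy : coprime (v ^ b) y.
  apply: coprimeXl; apply: coprime_prodl; apply/allP => q qs.
  apply: coprime_big_prime => //; [exact: sprime | have := sgt q qs; lia].
have cuv : coprime (u ^ a) (v ^ b).
  apply: coprimeXl; apply: coprimeXr; rewrite prime_coprime // dvdn_prime2 //.
have cmy : coprime m y.
  apply: coprime_prodl; apply/allP => q qs.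
  apply: coprime_big_prime => //; [exact: sprime | have := sgt q qs; lia].
have cmn : coprime m n.
  rewrite /n !coprimeMr cmy coprimeXr ?coprimeXr //; apply: coprime_big_prime => //.
have a1 : a != 1 by apply/eqP => e; rewrite e in ha1; lia.
have b1 : b != 1 by apply/eqP => e; rewrite e in hb1; rewrite /blo in hb1; lia.
have phin : phi B n = C + (X0.+1 + X0.+1) + phi B y.
  have ua0 : 0 < u ^ a by rewrite expn_gt0 u0.
  have vb0 : 0 < v ^ b by rewrite expn_gt0 v0.
  have yu0 : 0 < y * u ^ a by rewrite muln_gt0 y0 ua0.
  rewrite /n (phiM B yu0 vb0); last by rewrite coprimeMl cuv andbT coprime_sym.
  rewrite (phiM B y0 ua0); last by rewrite coprime_sym.
  rewrite !phi_pow //; try lia.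
  rewrite /delta' (negbTE a1) (negbTE b1) da db /C; lia.
pose K := C + (X0 + X0).+1 + phi B y.
have hK : B ^ K = N1.
  rewrite /N1 /W /K hX -!expnD; congr (B ^ _); lia.
have hKd : K = C + (X0 + X0).+1 + phi B y by [].
rewrite -hK -/n in hn1 hn2.
clearbody n K.
have BK0 : 0 < B ^ K by rewrite expn_gt0; lia.
have dn : delta B n = K.+1.
  apply: deltaE => //; rewrite hn1 /= expnS.
  have : n < 2 * B ^ K by apply: (lt2 m0 hn2).
  move=> h; apply: leq_trans h _; rewrite leq_mul2r; lia.
have dmn : delta B (m * n) = K + delta B m.
  have dm1 := delta_ge B1 m0; have dm2 := delta_lt m B1.
  have dpos : 0 < delta B m by [].
  have e : K + delta B m = (K + (delta B m).-1).+1 by lia.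
  rewrite e; apply: deltaE => //; apply/andP; split.
    by rewrite expnD [m * n]mulnC leq_mul.
  rewrite -e expnD; apply: leq_trans hn2 _; rewrite mulnC leq_mul2l addn1 dm2 orbT //.
exists n; split => //.
  by rewrite phin dn hKd; lia.
by rewrite dmn dn; lia.
Qed.

Import Order.TTheory GRing.Theory Num.Theory.

Lemma econE B n : economical B n = (phi B n <= delta B n).
Proof. by rewrite /economical /h subr_ge0 lez_nat. Qed.

Lemma frugE B n : frugal B n = (phi B n < delta B n).
Proof. by rewrite /frugal /h subr_gt0 ltz_nat. Qed.

Theorem proposition4 (B m : nat) :
  2 <= B -> 0 < m ->
  (forall n : nat, 0 < n -> economical B n -> economical B (m * n)) ->
  frugal B m.
Proof.
move=> B2 m0 Hyp.
have [u mu pu] := prime_above m.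
have [v uv pv] := prime_above u.
have neq : u != v by apply/eqP => e; rewrite e in uv; lia.
have mv : m < v by lia.
have [d1 [c1 [d0 c0 H]]] := approx pu pv neq m0.
have [n [n0 e cmn dmn]] : exists n, [/\ 0 < n, phi B n = delta B n, coprime m n &
                delta B (m * n) + 1 = delta B m + delta B n].
  case: H => [[h1 h2]|[h1 h2]].
    exact: (core B2 m0 pu pv neq mu mv d0 c0 h1 h2).
  by apply: (core B2 m0 pv pu _ mv mu c0 d0 h1 h2); rewrite eq_sym.
have := Hyp n n0; rewrite !econE e leqnn => /(_ isT).
rewrite phiM // frugE; lia.
Qed.
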